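(* For any eviction algorithm $\mathcal Q$ and any input (and, if $\mathcal Q$ is randomized, any realization of its random bits) there exists an eviction graph $H_{\mathcal Q}$ with edge set $E$ such that $$\mathrm{OBJ}_{\mathcal Q}\le \mathrm{OPT}+|E|.$$
   Context: Caching setting: cache of capacity $k$, requests $\sigma(1),\dots,\sigma(T)$ processed online starting from an empty cache; on a hit nothing happens, on a miss the page is loaded and, if the cache is full, one cached page is evicted first. $\mathrm{OBJ}_{\mathcal Q}$ is the number of misses of $\mathcal Q$; $\mathrm{OPT}$ is the number of misses of Belady's optimal offline algorithm (evicts the cached page whose next request is furthest in the future). $\nu(t)=\min\{s>t:\sigma(s)=\sigma(t)\}$ ($T+1$ if none). Cached pages are identified by the index of their most recent request: $\mathcal I_{\mathcal Q}(t)$ is the set of indices $\max\{t'\le t:\sigma(t')=s\}$ over pages $s$ cached after processing request $t$. An eviction graph $H_{\mathcal Q}$ is a directed graph on vertex set $\{1,\dots,T\}$ such that for every edge $(i,j)$ there is a time $t+1$ at which $\mathcal Q$ evicts $\sigma(j)$ with $j\in\mathcal I_{\mathcal Q}(t)$ while $i\in\mathcal I_{\mathcal Q}(t)$ and $\nu(i)>\nu(j)$; moreover for each $j$ there is at most one edge of the form $(i,j)$. *)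

(* Defs.v *)
From mathcomp Require Import all_boot.
Set Implicit Arguments. Unset Strict Implicit. Unset Printing Implicit Defensive.

(* Pages are natural numbers.  The request sequence is [sigma : seq nat];
   requests are 1-indexed: the t-th request (1 <= t <= T := size sigma) is
   [req sigma t = nth 0 sigma t.-1]. *)

Section Caching.
Variables (k : nat) (sigma : seq nat).

Definition T := size sigma.
Definition req (t : nat) : nat := nth 0 sigma t.-1.

Definition next_req (t p : nat) : nat :=
  head T.+1 [seq s <- iota t.+1 (T - t) | req s == p].

Definition nu (t : nat) : nat := next_req t (req t).

Definition last_req (t p : nat) : nat :=
  last 0 [seq s <- iota 1 t | req s == p].

(* An eviction algorithm, for a fixed input and a fixed realization of its
   random bits, is described by its eviction decision: at time t, with
   current cache content c (list of cached pages), it evicts page [Q t c].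
   This is only consulted on a miss with a full cache. *)
Definition policy := nat -> seq nat -> nat.

Definition step (Q : policy) (t : nat) (c : seq nat) : seq nat :=
  let p := req t in
  if p \in c then c
  else if size c < k then p :: c
  else p :: rem (Q t c) c.

Fixpoint cache (Q : policy) (t : nat) : seq nat :=
  match t with
  | 0 => [::]
  | t'.+1 => step Q t'.+1 (cache Q t')
  end.

Definition miss (Q : policy) (t : nat) : bool := req t \notin cache Q t.-1.

Definition evicts_at (Q : policy) (t : nat) : bool :=
  miss Q t && (k <= size (cache Q t.-1)).

Definition valid_policy (Q : policy) : Prop :=
  forall t, 1 <= t <= T -> evicts_at Q t -> Q t (cache Q t.-1) \in cache Q t.-1.

Definition OBJ (Q : policy) : nat := \sum_(1 <= t < T.+1) miss Q t.

(* Belady: evict the cached page whose next request is furthest in the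
   future (ties broken in favour of the first such page in the list). *)
Definition belady : policy := fun t c =>
  foldl (fun best p => if next_req t best < next_req t p then p else best)
        (head 0 c) c.

Definition OPT : nat := OBJ belady.

(* I_Q(t): indices of the most recent requests of pages cached after t *)
Definition inI (Q : policy) (t j : nat) : bool :=
  [&& 1 <= j, j <= t, req j \in cache Q t & last_req t (req j) == j].

Definition eviction_graph (Q : policy) (E : seq (nat * nat)) : Prop :=
  [/\ uniq E,
      (forall e, e \in E -> (1 <= e.1 <= T) && (1 <= e.2 <= T)),
      (forall e, e \in E ->
         exists t, [/\ t.+1 <= T, evicts_at Q t.+1,
                       Q t.+1 (cache Q t) = req e.2,
                       inI Q t e.2 && inI Q t e.1 & nu e.1 > nu e.2])
    & (forall j, count (fun e => e.2 == j) E <= 1)].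

End Caching.

(* Main.v *)
Require Import Defs.
From mathcomp Require Import all_boot zify.
Set Implicit Arguments. Unset Strict Implicit. Unset Printing Implicit Defensive.

Lemma count_sub_in (T : eqType) (a1 a2 : pred T) (s : seq T) :
  {in s, forall x, a1 x -> a2 x} -> count a1 s <= count a2 s.
Proof.
elim: s => //= x s IH H.
rewrite leq_add //; last by apply: IH => y ys; apply: H; rewrite inE ys orbT.
by case: (boolP (a1 x)) => //= /(H x (mem_head _ _)) ->.
Qed.

Lemma count_rem_le (T : eqType) (a : pred T) z (s : seq T) :
  count a (rem z s) <= count a s.
Proof.
case: (boolP (z \in s)) => zs; last by rewrite rem_id.
by rewrite ((permP (perm_to_rem zs)) a) /= leq_addl.
Qed.

Lemma count_rem_lt (T : eqType) (a : pred T) z (s : seq T) :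
  z \in s -> a z -> count a (rem z s) < count a s.
Proof. by move=> zs az; rewrite ((permP (perm_to_rem zs)) a) /= az. Qed.

Lemma count_le1 (T : eqType) (a : pred T) (s : seq T) x :
  uniq s -> {in s, forall z, a z -> z = x} -> count a s <= 1.
Proof.
move=> us H; apply: leq_trans (count_sub_in (a2 := pred1 x) _) _.
  by move=> z zs /(H z zs) ->; rewrite /= eqxx.
by rewrite count_uniq_mem // leq_b1.
Qed.

Lemma mem_rem_neq (T : eqType) (s : seq T) y w :
  uniq s -> w != y -> (w \in rem y s) = (w \in s).
Proof. by move=> us wy; rewrite (mem_rem_uniq _ us) inE wy. Qed.

Lemma notin_rem (T : eqType) (s : seq T) y :
  uniq s -> y \notin rem y s.
Proof. by move=> us; rewrite (mem_rem_uniq _ us) inE eqxx. Qed.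

Lemma exists_notin (T : eqType) (a b : seq T) :
  uniq a -> size b < size a -> exists2 z, z \in a & z \notin b.
Proof.
move=> ua lt; case: (boolP (all (mem b) a)) => [/allP sub|].
  by have := uniq_leq_size ua sub; rewrite leqNgt lt.
by case/allPn=> z za zb; exists z.
Qed.

Definition minsf (f : nat -> nat) (s : seq nat) :=
  foldr (fun y m => minn (f y) m) (f (head 0 s)) s.

Lemma minsf_le f s y : y \in s -> minsf f s <= f y.
Proof.
rewrite /minsf; move: (f (head 0 s)) => x0.
elim: s => //= a s IH; rewrite inE => /orP[/eqP->|ys]; first exact: geq_minl.
exact: leq_trans (geq_minr _ _) (IH ys).
Qed.

Lemma minsf_ex f s : s != [::] -> exists2 y, y \in s & minsf f s = f y.
Proof.
case: s => // a s _; rewrite /minsf /=.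
have: forall x0, x0 = f a -> exists2 y, y \in a :: s &
   minn (f a) (foldr (fun y m => minn (f y) m) x0 s) = f y.
  elim: s => [|b s IH] x0 E /=.
    by exists a; rewrite ?mem_head // E minnn.
  rewrite minnCA; case: (leqP (f b) (minn (f a) (foldr (fun y m => minn (f y) m) x0 s))) => H.
    by exists b; rewrite ?inE ?eqxx ?orbT //; apply/minn_idPl.
  have [y ys ->] := IH x0 E.
  by exists y => //; move: ys; rewrite !inE => /orP[->|->]; rewrite ?orbT.
by move/(_ _ erefl).
Qed.

Lemma cnt_lt_in (T : eqType) (a1 a2 : pred T) (s : seq T) x :
  x \in s -> {in s, forall w, a1 w -> a2 w} -> ~~ a1 x -> a2 x -> count a1 s < count a2 s.
Proof.
move=> xs H n1 p2; rewrite (permP (perm_to_rem xs) a1) (permP (perm_to_rem xs) a2) /=.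
rewrite (negbTE n1) p2 add0n add1n ltnS; apply: count_sub_in => w wr.
by apply: H; exact: mem_rem wr.
Qed.

Section S.
Variables (k : nat) (sigma : seq nat).
Local Notation TT := (T sigma).
Local Notation rq := (req sigma).
Local Notation nr := (next_req sigma).
Local Notation lr := (last_req sigma).

Lemma nr_step t p : t < TT -> nr t p = if rq t.+1 == p then t.+1 else nr t.+1 p.
Proof.
move=> lt; rewrite /next_req -(subnSK lt) /=.
by case: (rq t.+1 == p).
Qed.

Lemma nr_gt t p : t <= TT -> t < nr t p.
Proof.
move=> le; move: {2}(TT - t) (erefl (TT - t)) => n.
elim: n t le => [|n IH] t le E.
  have ->: t = TT by apply/eqP; rewrite eqn_leq le /= -subn_eq0 E.
  by rewrite /next_req subnn.
have lt: t < TT by rewrite -subn_gt0 E.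
rewrite nr_step //; case: (rq t.+1 == p) => //.
apply: ltn_trans (IH t.+1 lt _) => //.
by rewrite subnS E.
Qed.

Lemma nr_const i m p : i + m <= TT -> (forall s, i < s <= i + m -> rq s != p) ->
  nr i p = nr (i + m) p.
Proof.
elim: m => [|m IH] le H; first by rewrite addn0.
rewrite IH; last first.
  by move=> s /andP[a b]; apply: H; rewrite a (leq_trans b) // addnS leqnSn.
  by apply: leq_trans le; rewrite leq_add2l.
rewrite nr_step; last by rewrite -addnS.
rewrite addnS (negbTE (H _ _)) //.
by rewrite addnS leqnn ltnS leq_addr.
Qed.

Lemma lr_step t p : lr t.+1 p = if rq t.+1 == p then t.+1 else lr t p.
Proof.
rewrite /last_req.
have ->: iota 1 t.+1 = rcons (iota 1 t) t.+1 by rewrite -cats1 -(addn1 t) iotaD addnC.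
by rewrite filter_rcons; case: (rq t.+1 == p); rewrite ?last_rcons.
Qed.

Lemma lr_spec t p : 0 < lr t p ->
  [/\ lr t p <= t, rq (lr t p) = p & forall s, lr t p < s <= t -> rq s != p].
Proof.
elim: t => [|t IH]; first by [].
rewrite lr_step; case: eqP => [<-|ne] pos.
  split=> // s /andP[a b]; by rewrite ltnNge b in a.
have [a b c] := IH pos; split=> //; first by rewrite (leq_trans a).
move=> s /andP[s1 s2]; rewrite leq_eqVlt in s2; case/orP: s2 => [/eqP->|s2].
  by apply/eqP.
by apply: c; rewrite s1.
Qed.

Lemma lr_ge t p s : 1 <= s <= t -> rq s = p -> s <= lr t p.
Proof.
elim: t => [|t IH] /andP[s1 s2] E; first by rewrite leqn0 in s2; rewrite (eqP s2) in s1.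
rewrite lr_step; case: eqP => // ne.
rewrite leq_eqVlt in s2; case/orP: s2 => [/eqP es|s2].
  by case: ne; rewrite -es.
by apply: IH => //; rewrite s1.
Qed.

Hypothesis kpos : 0 < k.

Fixpoint F (n t : nat) (c : seq nat) : nat :=
  if n is n'.+1 then
    if rq t.+1 \in c then F n' t.+1 c
    else if size c < k then (F n' t.+1 (rq t.+1 :: c)).+1
    else (minsf (fun p => F n' t.+1 (rq t.+1 :: rem p c)) c).+1
  else 0.

Definition nxt t (c c2 : seq nat) : Prop :=
  if rq t.+1 \in c then c2 = c
  else if size c < k then c2 = rq t.+1 :: c
  else exists2 y, y \in c & c2 = rq t.+1 :: rem y c.

Lemma F_upper n t c c2 : nxt t c c2 -> F n.+1 t c <= (rq t.+1 \notin c) + F n t.+1 c2.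
Proof.
rewrite /nxt /=; case: (rq t.+1 \in c) => [->//|].
case: (size c < k) => [->//|[y yc ->]].
by rewrite add1n ltnS minsf_le.
Qed.

Lemma F_witness n t c : exists2 c2, nxt t c c2 & F n.+1 t c = (rq t.+1 \notin c) + F n t.+1 c2.
Proof.
rewrite /nxt /=; case: (rq t.+1 \in c); first by exists c.
case: ltnP => H; first by exists (rq t.+1 :: c).
have ne : c != [::] by case: c H => //=; rewrite leqn0 => /eqP E; move: kpos; rewrite E.
have [y yc E] := minsf_ex (fun p => F n t.+1 (rq t.+1 :: rem p c)) ne.
by exists (rq t.+1 :: rem y c); [exists y | rewrite E].
Qed.

Lemma nxt_inv t c c2 : nxt t c c2 -> uniq c -> size c <= k -> uniq c2 /\ size c2 <= k.
Proof.
rewrite /nxt; case: (boolP (rq t.+1 \in c)) => [_ ->//|rc].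
case: ltnP => H; first by move=> -> /= -> _; rewrite rc.
case=> y yc -> uc sc /=; rewrite rem_uniq // andbT size_rem // prednK; last by case: (c) yc.
split=> //; apply: contra rc; exact: mem_rem.
Qed.

Local Notation d a b := (count (fun w => w \notin a) b).

Lemma dle (a A b S : seq nat) : {in S, forall w, w \notin A -> w \notin a} ->
  (S = b \/ exists y, S = rem y b) -> d A S <= d a b.
Proof.
move=> H HS; apply: leq_trans (count_sub_in H) _.
by case: HS => [->|[y ->]]; rewrite ?count_rem_le.
Qed.

Lemma comb_D t a b b2 : uniq a -> uniq b -> size a <= k -> size b <= k -> nxt t b b2 ->
  exists2 a2, nxt t a a2 & (rq t.+1 \notin a) + d a2 b2 <= (rq t.+1 \notin b) + d a b.
Proof.
move=> ua ub sa sb; rewrite /nxt; set r := rq t.+1.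
case: (boolP (r \in a)) => ra; case: (boolP (r \in b)) => rb.
- by move=> ->; exists a.
- move=> nb; exists a => //=; rewrite add0n add1n.
  case: ltnP nb => _; [move=> -> | case=> y yb ->]; rewrite /= ra add0n;
  by apply: leqW; rewrite ?count_rem_le.
- move=> ->; rewrite /= ?add1n ?add0n.
  case: ltnP => sa'.
    exists (r :: a) => //; apply: cnt_lt_in rb _ _ _; rewrite ?inE ?eqxx //.
    by move=> w _; rewrite inE negb_or => /andP[].
  have [z za zb] : exists2 z, z \in a & z \notin rem r b.
    apply: exists_notin => //; rewrite size_rem //.
    by apply: leq_trans sa'; case: (b) rb sb => //= ? ? _; rewrite ltnS.
  have zb' : z \notin b.
    by rewrite -(mem_rem_neq (y:=r) ub) //; apply: contraNneq ra => <-.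
  exists (r :: rem z a); first by exists z.
  apply: cnt_lt_in rb _ _ _; rewrite ?inE ?eqxx //.
  move=> w wb; rewrite inE negb_or => /andP[_].
  rewrite mem_rem_neq //; apply: contraNneq zb' => <-; exact: wb.
- move=> nb; rewrite /= ?add1n ?ltnS.
  case: (ltnP (size a) k) => sa'.
    exists (r :: a) => //; rewrite add1n ltnS.
    case: ltnP nb => _; [move=> -> | case=> y yb ->]; rewrite /= mem_head add0n;
      apply: dle; try (by left); try (by right; exists y);
      by move=> w _; rewrite inE negb_or => /andP[].
  case: ltnP nb => sb'.
    move=> ->.
    have [z za zb] := exists_notin ua (leq_trans sb' sa').
    exists (r :: rem z a); first by exists z.
    rewrite add1n ltnS.
    rewrite /= mem_head add0n; apply: dle; last by left.
    move=> w wb; rewrite inE negb_or => /andP[_].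
    rewrite mem_rem_neq //; apply: contraNneq zb => <-; exact: wb.
  case=> y yb ->.
  have [z za hz] : exists2 z, z \in a & forall w, w \in rem y b -> w != z.
    case: (boolP (y \in a)) => ya.
      by exists y => // w; rewrite (mem_rem_uniq _ ub) inE => /andP[].
    have [z za zb] : exists2 z, z \in a & z \notin rem y b.
      apply: exists_notin => //; rewrite size_rem //.
      by apply: leq_trans sa'; case: (b) yb sb => //= ? ? _; rewrite ltnS.
    exists z => // w wb; apply: contraNneq zb => <-; exact: wb.
  exists (r :: rem z a); first by exists z.
    rewrite add1n ltnS.
  rewrite /= mem_head add0n; apply: dle; last by right; exists y.
  move=> w wb; rewrite inE negb_or => /andP[_].
  by rewrite mem_rem_neq // hz.
Qed.

Lemma Fdiff n : forall t a b, uniq a -> uniq b -> size a <= k -> size b <= k ->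
  F n t a <= F n t b + d a b.
Proof.
elim: n => [|n IH] t a b ua ub sa sb; first by [].
have [b2 nb Fb] := F_witness n t b.
have [a2 na H] := comb_D ua ub sa sb nb.
have [ua2 sa2] := nxt_inv na ua sa.
have [ub2 sb2] := nxt_inv nb ub sb.
have := IH t.+1 a2 b2 ua2 ub2 sa2 sb2.
have := F_upper n na.
rewrite Fb; lia.
Qed.

Lemma Fexch n : forall t a b x y, t + n <= TT -> uniq a -> uniq b -> size a = size b ->
  size b <= k -> x \in b -> y \notin b -> a =i y :: rem x b -> nr t y <= nr t x ->
  F n t a <= F n t b.
Proof.
elim: n => [|n IH] t a b x y tn ua ub sab sb xb yb ha hn; first by [].
have ltT : t < TT by move: tn; rewrite addnS => /(leq_trans _); apply; rewrite ltnS leq_addr.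
have [b2 nb Fb] := F_witness n t b.
have sa : size a <= k by rewrite sab.
have ya : y \in a by rewrite ha mem_head.
have xy : x != y by apply: contraNneq yb => <-.
have xa : x \notin a by rewrite ha inE negb_or xy notin_rem.
have hab : forall w, w != x -> w != y -> (w \in a) = (w \in b).
  by move=> w wx wy; rewrite ha inE (negbTE wy) /= mem_rem_neq.
have [ub2 sb2] := nxt_inv nb ub sb.
have tn' : t.+1 + n <= TT by rewrite addSn -addnS.
move: nb Fb; rewrite /nxt; set r := rq t.+1 => nb Fb.
case: (r =P y) => [ry|/eqP ry].
  have ra: r \in a by rewrite ry.
  have rb: r \notin b by rewrite ry.
  have na : nxt t a a by rewrite /nxt -/r ra.
  apply: leq_trans (F_upper n na) _; rewrite -/r ra add0n Fb rb add1n.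
  apply: leq_trans (Fdiff n t.+1 ua ub2 sa sb2) _; rewrite -[(F n t.+1 b2).+1]addn1 leq_add2l.
  rewrite (negbTE rb) in nb.
  have H1 : count (fun w => w \notin a) b <= 1.
    apply: (count_le1 (x:=x)) ub _ => w wb wa; apply/eqP; apply: contraNT wa => wx.
    have wy : w != y by apply: contraNneq yb => <-.
    by rewrite hab.
  case: ltnP nb => _; [move=> -> | case=> z zb ->]; rewrite /= ra add0n //.
  exact: leq_trans (count_rem_le _ _ _) H1.
case: (r =P x) => [rx|/eqP rx].
  exfalso.
  have e1 : nr t x = t.+1 by rewrite nr_step // -/r rx eqxx.
  have e2 : nr t y = nr t.+1 y by rewrite nr_step // -/r (negbTE ry).
  have := @nr_gt t.+1 y ltT; lia.
have ey : nr t y = nr t.+1 y by rewrite nr_step // -/r (negbTE ry).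
have ex : nr t x = nr t.+1 x by rewrite nr_step // -/r (negbTE rx).
rewrite ey ex in hn.
have hr := hab r rx ry.
case: (boolP (r \in b)) => rb.
  rewrite rb in nb Fb; subst b2.
  have na : nxt t a a by rewrite /nxt -/r hr rb.
  apply: leq_trans (F_upper n na) _; rewrite -/r hr rb add0n Fb.
  exact: (IH t.+1 a b x y).
have ra : r \notin a by rewrite hr.
rewrite (negbTE rb) in nb Fb; rewrite Fb.
case: (ltnP (size b) k) nb => sbk.
  move=> E; subst b2.
  have na : nxt t a (r :: a) by rewrite /nxt -/r (negbTE ra) sab sbk.
  apply: leq_trans (F_upper n na) _; rewrite -/r ra /= !add1n ltnS.
  apply: (IH t.+1 _ _ x y) => //=.
  - by rewrite ra.
  - by rewrite sab.
  - by rewrite inE xb orbT.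
  - by rewrite inE negb_or eq_sym ry.
  - by move=> w; rewrite (negbTE rx) !inE ha inE orbCA.
case=> z zb E; subst b2.
case: (z =P x) => [zx|/eqP zx].
  subst z.
  have na : nxt t a (r :: rem y a).
    by rewrite /nxt -/r (negbTE ra) sab ltnNge sbk /=; exists y.
  apply: leq_trans (F_upper n na) _; rewrite -/r ra /= !add1n ltnS.
  have [ua2 sa2] := nxt_inv na ua sa.
  apply: leq_trans (Fdiff n t.+1 ua2 ub2 sa2 sb2) _.
  rewrite -[X in _ <= X]addn0 leq_add2l leqn0; apply/eqP.
  rewrite -(count_pred0 (r :: rem x b)); apply: eq_in_count.
  move=> w wb2 /=; apply/negbTE; rewrite negbK inE.
  rewrite inE in wb2; case/orP: wb2 => [->//|wb].
  have wy : w != y by apply: contraNneq yb => <-; exact: mem_rem wb.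
  by rewrite mem_rem_neq // ha in_cons wb !orbT.
have zy : z != y by apply: contraNneq yb => <-.
have za : z \in a by rewrite hab.
have na : nxt t a (r :: rem z a).
  by rewrite /nxt -/r (negbTE ra) sab ltnNge sbk /=; exists z.
apply: leq_trans (F_upper n na) _; rewrite -/r ra /= !add1n ltnS.
apply: (IH t.+1 _ _ x y) => //=.
- by rewrite rem_uniq // andbT; apply: contra ra; exact: mem_rem.
- by rewrite (size_rem za) (size_rem zb) sab.
- by rewrite in_cons mem_rem_neq 1?eq_sym // xb orbT.
- by rewrite in_cons negb_or eq_sym ry /=; apply: contra yb; exact: mem_rem.
- move=> w; rewrite (negbTE rx) !inE.
  rewrite (mem_rem_uniq _ ua) (mem_rem_uniq _ (rem_uniq _ ub)) !inE (mem_rem_uniq _ ub) !inE.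
  rewrite ha in_cons (mem_rem_uniq _ ub) !inE.
  case: (w =P y) => [->|_]; first by rewrite (eq_sym y z) zy /= orbT.
  by rewrite /=; case: (w == r); case: (w == x); case: (w == z).
Qed.

Lemma mem_step P t c p : p \in step k sigma P t c -> p = rq t \/ p \in c.
Proof.
rewrite /step; case: (rq t \in c); first by right.
case: (size c < k); rewrite inE => /orP[/eqP->|H]; auto.
by right; exact: mem_rem H.
Qed.

Lemma step_nxt P t c : (rq t.+1 \notin c -> k <= size c -> P t.+1 c \in c) ->
  nxt t c (step k sigma P t.+1 c).
Proof.
rewrite /nxt /step; case: (boolP (rq t.+1 \in c)) => // rc H.
by case: ltnP => // sc; exists (P t.+1 c) => //; apply: H.
Qed.

Lemma cache_inv P t : (forall s, s < t -> evicts_at k sigma P s.+1 ->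
   P s.+1 (cache k sigma P s) \in cache k sigma P s) ->
  uniq (cache k sigma P t) /\ size (cache k sigma P t) <= k.
Proof.
elim: t => [|t IH] H; first by [].
have [u s] : uniq (cache k sigma P t) /\ size (cache k sigma P t) <= k.
  by apply: IH => s st; apply: H; apply: ltn_trans st _.
apply: (nxt_inv (t := t) _ u s) => /=.
apply: step_nxt => rc sc; apply: H => //.
by rewrite /evicts_at /miss /= rc sc.
Qed.

Lemma cache_lr P t p : p \in cache k sigma P t -> 0 < lr t p.
Proof.
elim: t => [|t IH] //= /mem_step [->|H]; rewrite lr_step.
  by rewrite eqxx.
by case: (_ == _) => //; apply: IH.
Qed.

Lemma reenter P s1 s2 p : s1 <= s2 -> p \notin cache k sigma P s1 ->
  p \in cache k sigma P s2 -> exists2 s, s1 < s <= s2 & rq s = p.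
Proof.
elim: s2 => [|s2 IH] le n1 i2.
  by move: le; rewrite leqn0 => /eqP E; rewrite E i2 in n1.
rewrite leq_eqVlt in le; case/orP: le => [/eqP E|le].
  by rewrite E i2 in n1.
case/mem_step: i2 => [E|i2].
  by exists s2.+1 => //; rewrite le leqnn.
have [s h1 h2] := IH le n1 i2; exists s => //.
by case/andP: h1 => -> /= /leq_trans; apply.
Qed.

Definition qev (Q : policy) t := Q t.+1 (cache k sigma Q t).
Definition bad (Q : policy) t := evicts_at k sigma Q t.+1 &&
  has (fun p => nr t (qev Q t) < nr t p) (cache k sigma Q t).

Lemma valid_inv Q t : valid_policy k sigma Q -> t <= TT ->
  uniq (cache k sigma Q t) /\ size (cache k sigma Q t) <= k.
Proof.
move=> V tT; apply: cache_inv => s st ev.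
by apply: (V s.+1) => //; rewrite /= (leq_trans st tT).
Qed.

Lemma SQ Q n t : valid_policy k sigma Q -> t + n.+1 <= TT ->
  miss k sigma Q t.+1 + F n t.+1 (cache k sigma Q t.+1) <= F n.+1 t (cache k sigma Q t) + bad Q t.
Proof.
move=> V tn.
have ltT : t < TT by move: tn; rewrite addnS => /(leq_trans _); apply; rewrite ltnS leq_addr.
have [uc sc] := valid_inv V (ltnW ltT).
have [c2 n2 Fc] := F_witness n t (cache k sigma Q t).
rewrite Fc /miss /= -addnA leq_add2l.
move: n2; rewrite /nxt /bad /evicts_at /miss /qev /=.
set c := cache k sigma Q t; set r := rq t.+1; set q := Q t.+1 c.
rewrite /step -/r -/c -/q.
have uc' : uniq c := uc.
case: (boolP (r \in c)) => rc; first by move=> ->; rewrite leq_addr.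
case: ltnP => sk; first by move=> ->; rewrite leq_addr.
case=> y yc ->.
have qc : q \in c by apply: (V t.+1) => //; rewrite /evicts_at /miss /= rc sk.
have [ub2 sb2] := nxt_inv (t:=t) (c:=c) (c2 := r :: rem y c) (ltac:(rewrite /nxt -/r (negbTE rc) ltnNge sk /=; exists y => //)) uc sc.
have [ua2 sa2] := nxt_inv (t:=t) (c:=c) (c2 := r :: rem q c) (ltac:(rewrite /nxt -/r (negbTE rc) ltnNge sk /=; exists q => //)) uc sc.
case: (boolP (has _ c)) => /= hc.
  apply: leq_trans (Fdiff n t.+1 ua2 ub2 sa2 sb2) _; rewrite leq_add2l.
  rewrite /= mem_head add0n; apply: leq_trans (count_rem_le _ _ _) _.
  apply: (count_le1 (x:=q)) uc' _ => w wc; rewrite inE negb_or => /andP[_ wq].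
  by apply/eqP; apply: contraNT wq => wq'; rewrite mem_rem_neq.
rewrite addn0.
case: (y =P q) => [->//|/eqP yq].
have ry : r != y by apply: contraNneq rc => ->.
have rq' : r != q by apply: contraNneq rc => ->.
have qy : q != y by rewrite eq_sym.
apply: (Fexch (x := q) (y := y)).
- by rewrite addSn -addnS.
- exact: ua2.
- exact: ub2.
- by rewrite /= (size_rem yc) (size_rem qc).
- exact: sb2.
- by rewrite in_cons (mem_rem_neq uc' qy) qc orbT.
- by rewrite in_cons negb_or eq_sym ry /= (notin_rem _ uc').
- move=> w; rewrite [rem q (r :: _)]/= (negbTE rq') !inE.
  rewrite (mem_rem_uniq _ uc') (mem_rem_uniq _ (rem_uniq _ uc')) !inE (mem_rem_uniq _ uc') !inE.
  case: (w =P y) => [->|_]; first by rewrite yq yc /= orbT.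
  by rewrite /=; case: (w == r); case: (w == q).
- move/hasPn: hc => /(_ y yc); rewrite -leqNgt.
  by rewrite (@nr_step t y ltT) (@nr_step t q ltT) -/r (negbTE ry) (negbTE rq').
Qed.

Lemma foldl_mem (f : nat -> nat -> nat) (x0 : nat) (s : seq nat) :
  (forall a b, f a b = a \/ f a b = b) -> foldl f x0 s \in x0 :: s.
Proof.
move=> Hf; elim: s x0 => [|a s IH] x0 /=; first by rewrite mem_head.
have := IH (f x0 a); rewrite inE => /orP[/eqP->|H]; last by rewrite !inE H !orbT.
by case: (Hf x0 a) => ->; rewrite !inE eqxx ?orbT.
Qed.

Lemma belady_mem t c : c != [::] -> belady sigma t c \in c.
Proof.
case: c => // a s _; rewrite /belady /=.
have := @foldl_mem (fun best p => if nr t best < nr t p then p else best) a (a :: s).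
rewrite /=; move=> H; have := H (fun x y => ltac:(case: ifP; auto)).
by rewrite inE => /orP[/eqP->|//]; rewrite mem_head.
Qed.

Lemma belady_ok s : evicts_at k sigma (belady sigma) s.+1 ->
  belady sigma s.+1 (cache k sigma (belady sigma) s) \in cache k sigma (belady sigma) s.
Proof.
rewrite /evicts_at => /andP[_ H]; apply: belady_mem.
by case: (cache _ _ _ _) H => //=; rewrite leqn0 => /eqP E; move: kpos; rewrite E.
Qed.

Lemma trajB n : forall t, t + n = TT ->
  F n t (cache k sigma (belady sigma) t) <= \sum_(t.+1 <= s < TT.+1) miss k sigma (belady sigma) s.
Proof.
elim: n => [|n IH] t tn; first by [].
have ltT : t < TT by rewrite -tn addnS ltnS leq_addr.
rewrite big_ltn ?ltnS //.
have nx : nxt t (cache k sigma (belady sigma) t) (cache k sigma (belady sigma) t.+1).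
  by apply: step_nxt => rc sc; apply: belady_ok; rewrite /evicts_at /miss /= rc sc.
apply: leq_trans (F_upper n nx) _; rewrite leq_add2l.
by apply: IH; rewrite addSn -addnS.
Qed.

Lemma trajQ Q n : valid_policy k sigma Q -> forall t, t + n = TT ->
  \sum_(t.+1 <= s < TT.+1) miss k sigma Q s <= F n t (cache k sigma Q t) + count (bad Q) (iota t n).
Proof.
move=> V; elim: n => [|n IH] t tn.
  by rewrite addn0 in tn; rewrite big_geq // tn.
have ltT : t < TT by rewrite -tn addnS ltnS leq_addr.
rewrite big_ltn ?ltnS //.
have := IH t.+1 (ltac:(by rewrite addSn -addnS)).
have := SQ (n:=n) (t:=t) V (ltac:(by rewrite tn)).
rewrite /=; lia.
Qed.

Lemma OBJ_le Q : valid_policy k sigma Q -> OBJ k sigma Q <= OPT k sigma + count (bad Q) (iota 0 TT).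
Proof.
move=> V; rewrite /OPT /OBJ.
have h2 := trajQ V (t := 0) erefl; have h1 := trajB (t := 0) erefl.
apply: leq_trans h2 _; exact: leq_add h1 (leqnn _).
Qed.

Definition pw (Q : policy) t :=
  nth 0 (cache k sigma Q t) (find (fun p => nr t (qev Q t) < nr t p) (cache k sigma Q t)).

Definition edges (Q : policy) :=
  [seq (lr t (pw Q t), lr t (qev Q t)) | t <- [seq t <- iota 0 TT | bad Q t]].

Lemma bad_facts Q t : valid_policy k sigma Q -> t < TT -> bad Q t ->
  [/\ qev Q t \in cache k sigma Q t, pw Q t \in cache k sigma Q t,
      nr t (qev Q t) < nr t (pw Q t) & qev Q t \notin cache k sigma Q t.+1].
Proof.
move=> V ltT /andP[ev hs].
have [uc _] := valid_inv V (ltnW ltT).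
have qc : qev Q t \in cache k sigma Q t by apply: (V t.+1) => //.
split=> //.
- by rewrite /pw mem_nth // -has_find.
- exact: (nth_find 0 hs).
move: ev; rewrite /evicts_at /miss /= => /andP[rc sc].
rewrite /step (negbTE rc) ltnNge sc /= in_cons negb_or (notin_rem _ uc) andbT.
by apply: contraNneq rc => <-.
Qed.

Lemma lr_facts Q t p : t <= TT -> p \in cache k sigma Q t ->
  [/\ 1 <= lr t p, lr t p <= t, rq (lr t p) = p & nu sigma (lr t p) = nr t p].
Proof.
move=> tT pc; have pos := cache_lr pc.
have [a b c] := lr_spec pos; split=> //; last first.
rewrite /nu b (nr_const (m := t - lr t p)) ?subnKC //.
Qed.

Lemma inI_lr Q t p : t <= TT -> p \in cache k sigma Q t -> inI k sigma Q t (lr t p).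
Proof.
move=> tT pc; have [a b c _] := lr_facts tT pc.
by rewrite /inI a b c pc eqxx.
Qed.

Lemma edges_inj Q : valid_policy k sigma Q ->
  {in [seq t <- iota 0 TT | bad Q t] &, injective (fun t => lr t (qev Q t))}.
Proof.
move=> V.
suff H : forall t1 t2, t1 < t2 -> t2 < TT -> bad Q t1 -> bad Q t2 ->
   lr t1 (qev Q t1) != lr t2 (qev Q t2).
  move=> t1 t2; rewrite !mem_filter !mem_iota /= !add0n => /andP[b1 l1] /andP[b2 l2] E.
  case: (ltngtP t1 t2) => // lt.
  - by move: (H _ _ lt l2 b1 b2); rewrite E eqxx.
  - by move: (H _ _ lt l1 b2 b1); rewrite E eqxx.
move=> t1 t2 lt l2 b1 b2; apply/eqP => E.
have l1 := ltn_trans lt l2.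
have [q1c _ _ q1n] := bad_facts V l1 b1.
have [q2c _ _ _] := bad_facts V l2 b2.
have [_ j1 r1 _] := lr_facts (ltnW l1) q1c.
have [_ j2 r2 _] := lr_facts (ltnW l2) q2c.
have eq : qev Q t1 = qev Q t2 by rewrite -r1 -r2 E.
rewrite eq in q1n.
have [s /andP[s1 s2] rs] := reenter lt q1n q2c.
have pos := cache_lr q2c.
have [_ _ c] := lr_spec pos.
have : rq s != qev Q t2.
  apply: c; rewrite s2 andbT -E; apply: leq_ltn_trans j1 _.
  exact: ltn_trans (ltnSn _) s1.
by rewrite rs eqxx.
Qed.

Lemma edges_ok Q : valid_policy k sigma Q ->
  eviction_graph k sigma Q (edges Q) /\ size (edges Q) = count (bad Q) (iota 0 TT).
Proof.
move=> V.
have U : uniq (map snd (edges Q)).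
  rewrite /edges -map_comp (map_inj_in_uniq (edges_inj V)).
  by rewrite filter_uniq // iota_uniq.
split; last by rewrite size_map size_filter.
have mem : forall e, e \in edges Q -> exists2 t, t < TT /\ bad Q t &
    e = (lr t (pw Q t), lr t (qev Q t)).
  move=> e /mapP [t]; rewrite mem_filter mem_iota add0n /= => /andP[bt lt] ->.
  by exists t.
split.
- exact: map_uniq U.
- move=> e /mem [t [lt bt] ->] /=.
  have [qc pc _ _] := bad_facts V lt bt.
  have [a1 b1 _ _] := lr_facts (ltnW lt) pc.
  have [a2 b2 _ _] := lr_facts (ltnW lt) qc.
  by rewrite a1 a2 (leq_trans b1 (ltnW lt)) (leq_trans b2 (ltnW lt)).
- move=> e /mem [t [lt bt] ->] /=.
  have [qc pc hp _] := bad_facts V lt bt.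
  have [_ _ r1 n1] := lr_facts (ltnW lt) pc.
  have [_ _ r2 n2] := lr_facts (ltnW lt) qc.
  exists t; split=> //.
  + by case/andP: bt.
  + by apply/andP; split; apply: inI_lr => //; exact: ltnW.
  + by rewrite n1 n2.
- move=> j; rewrite -(count_map snd (pred1 j)).
  by rewrite count_uniq_mem // leq_b1.
Qed.

End S.

Theorem mainTheorem5 (k : nat) (sigma : seq nat) (Q : policy) :
  0 < k -> valid_policy k sigma Q ->
  exists E : seq (nat * nat),
    eviction_graph k sigma Q E /\ OBJ k sigma Q <= OPT k sigma + size E.
Proof.
move=> kpos V; exists (edges k sigma Q).
have [G S] := edges_ok V.
by split=> //; rewrite S; apply: (OBJ_le kpos V).
Qed.
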